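(* Let $G$ be a group in which every non-abelian subgroup $H$ satisfies $C_G(H)\le H$, and let $N$ be a finite normal subgroup of $G$. Then $C_G(N)$ contains every element of $G$ of infinite order.
   Context: $C_G(H)$ denotes the centralizer of $H$ in $G$. *)

(* Defs.v *)
From Stdlib Require Import List Arith.

Record Group := {
  carrier :> Type;
  gmul : carrier -> carrier -> carrier;
  ginv : carrier -> carrier;
  gone : carrier;
  gmulA : forall x y z, gmul x (gmul y z) = gmul (gmul x y) z;
  gmul1l : forall x, gmul gone x = x;
  gmulVl : forall x, gmul (ginv x) x = gone
}.

Section GroupDefs.
Variable G : Group.

Fixpoint gpow (x : G) (n : nat) : G :=
  match n with
  | O => gone G
  | S m => gmul G x (gpow x m)
  end.

Definition is_subgroup (H : G -> Prop) : Prop :=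
  H (gone G) /\
  (forall x y, H x -> H y -> H (gmul G x y)) /\
  (forall x, H x -> H (ginv G x)).

Definition abelian (H : G -> Prop) : Prop :=
  forall x y, H x -> H y -> gmul G x y = gmul G y x.

Definition centralizer (H : G -> Prop) : G -> Prop :=
  fun g => forall h, H h -> gmul G g h = gmul G h g.

Definition is_normal (N : G -> Prop) : Prop :=
  is_subgroup N /\
  forall g n, N n -> N (gmul G (gmul G (ginv G g) n) g).

Definition finite_set (N : G -> Prop) : Prop :=
  exists l : list G, forall x, N x -> In x l.

Definition infinite_order (g : G) : Prop :=
  forall n : nat, 0 < n -> gpow g n <> gone G.

End GroupDefs.

(* Main.v *)
Require Import Defs.
From Stdlib Require Import List Arith Lia Classical.

Arguments gmul {_}. Arguments ginv {_}. Arguments gone {_}.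
Arguments gpow {_}.
Local Infix "**" := gmul (at level 40, left associativity).

Lemma gmulVr {G : Group} (x : G) : x ** ginv x = gone.
Proof.
  rewrite <- (gmul1l G (x ** ginv x)).
  rewrite <- (gmulVl G (ginv x)) at 1.
  rewrite <- gmulA, (gmulA G (ginv x)), gmulVl, gmul1l, gmulVl. reflexivity.
Qed.

Lemma gmul1r {G : Group} (x : G) : x ** gone = x.
Proof. rewrite <- (gmulVl G x), gmulA, gmulVr, gmul1l. reflexivity. Qed.

Lemma gcancel_l {G : Group} (x y z : G) : x ** y = x ** z -> y = z.
Proof.
  intro H. rewrite <- (gmul1l G y), <- (gmul1l G z), <- (gmulVl G x), <- !gmulA, H.
  reflexivity.
Qed.

Lemma gcancel_r {G : Group} (x y z : G) : y ** x = z ** x -> y = z.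
Proof.
  intro H. rewrite <- (gmul1r y), <- (gmul1r z), <- (gmulVr x), !gmulA, H.
  reflexivity.
Qed.

Lemma ginv_uniq {G : Group} (x y : G) : x ** y = gone -> ginv x = y.
Proof. intro H. apply (gcancel_l x). rewrite gmulVr, H. reflexivity. Qed.

Lemma ginvK {G : Group} (x : G) : ginv (ginv x) = x.
Proof. apply ginv_uniq. apply gmulVl. Qed.

Lemma ginvM {G : Group} (x y : G) : ginv (x ** y) = ginv y ** ginv x.
Proof.
  apply ginv_uniq. rewrite gmulA, <- (gmulA G x y), gmulVr, gmul1r, gmulVr.
  reflexivity.
Qed.

Lemma ginv1 {G : Group} : ginv (@gone G) = gone.
Proof. apply ginv_uniq. apply gmul1l. Qed.

Lemma gpow_add {G : Group} (x : G) a b : gpow x (a + b) = gpow x a ** gpow x b.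
Proof.
  induction a; simpl. rewrite gmul1l; reflexivity.
  rewrite IHa, gmulA; reflexivity.
Qed.

Lemma gpow_mul {G : Group} (x : G) a b : gpow x (a * b) = gpow (gpow x a) b.
Proof.
  induction b; simpl. rewrite Nat.mul_0_r; reflexivity.
  rewrite Nat.mul_succ_r, Nat.add_comm, gpow_add, IHb. reflexivity.
Qed.

Lemma gpow_comm {G : Group} (x : G) a b : gpow x a ** gpow x b = gpow x b ** gpow x a.
Proof. rewrite <- !gpow_add, Nat.add_comm. reflexivity. Qed.

Lemma gpow_Sr {G : Group} (x : G) n : gpow x (S n) = gpow x n ** x.
Proof.
  replace (S n) with (n + 1) by lia. rewrite gpow_add. simpl. rewrite gmul1r. reflexivity.
Qed.

Definition commute {G : Group} (x y : G) := x ** y = y ** x.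

Lemma commute_sym {G : Group} (x y : G) : commute x y -> commute y x.
Proof. unfold commute; auto. Qed.

Lemma commute_mul {G : Group} (x y z : G) :
  commute x y -> commute x z -> commute x (y ** z).
Proof.
  unfold commute; intros H1 H2. rewrite gmulA, H1, <- gmulA, H2, gmulA. reflexivity.
Qed.

Lemma commute_inv {G : Group} (x y : G) : commute x y -> commute x (ginv y).
Proof.
  unfold commute; intro H. apply (gcancel_l y). rewrite gmulA, <- H, <- gmulA, gmulVr,
    gmulA, gmulVr, gmul1l, gmul1r. reflexivity.
Qed.

Lemma commute_pow {G : Group} (x y : G) n : commute x y -> commute x (gpow y n).
Proof.
  intro H. induction n; simpl. unfold commute; rewrite gmul1l, gmul1r; reflexivity.
  apply commute_mul; auto.
Qed.

Lemma commute_one {G : Group} (x : G) : commute x gone.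
Proof. unfold commute; rewrite gmul1l, gmul1r; reflexivity. Qed.

Lemma gpow_inv {G : Group} (x : G) n : gpow (ginv x) n = ginv (gpow x n).
Proof.
  induction n; simpl. rewrite ginv1; reflexivity.
  rewrite ginvM, IHn.
  assert (C : commute (ginv x) (ginv (gpow x n))).
  { apply commute_inv, commute_sym, commute_inv, commute_sym.
    apply commute_pow. unfold commute; reflexivity. }
  rewrite C. reflexivity.
Qed.

Lemma pigeon {A : Type} (l : list A) (f : nat -> A) :
  (forall k, In (f k) l) -> exists i j, i < j /\ f i = f j.
Proof.
  intro Hf. apply NNPP; intro Hn.
  assert (Hnd : forall n a, NoDup (map f (seq a n))).
  { induction n; intro a; simpl. constructor.
    constructor; auto. intro Hin. apply in_map_iff in Hin as [k [Hk Hin]].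
    apply in_seq in Hin. apply Hn. exists a, k. split; [lia | auto]. }
  pose proof (NoDup_incl_length (Hnd (S (length l)) 0) (l' := l)) as L.
  rewrite length_map, length_seq in L.
  assert (S (length l) <= length l); [apply L | lia].
  intros y Hy. apply in_map_iff in Hy as [k [<- _]]. auto.
Qed.

Lemma subgroup_pow {G : Group} (N : G -> Prop) (y : G) k :
  is_subgroup G N -> N y -> N (gpow y k).
Proof.
  intros [H1 [HM HI]] Hy. induction k; simpl; auto.
Qed.

Lemma fin_order {G : Group} (N : G -> Prop) (y : G) :
  is_subgroup G N -> finite_set G N -> N y -> exists k, 0 < k /\ gpow y k = gone.
Proof.
  intros HS [l Hl] Hy.
  destruct (pigeon l (fun k => gpow y k)) as [i [j [Hij E]]].
  { intro k. apply Hl, subgroup_pow; auto. }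
  exists (j - i). split; [lia|].
  replace j with (i + (j - i)) in E by lia. rewrite gpow_add in E.
  symmetry. apply (gcancel_l (gpow y i)). rewrite gmul1r. exact E.
Qed.

Lemma pow_in_N_false {G : Group} (N : G -> Prop) (g : G) k :
  is_subgroup G N -> finite_set G N -> infinite_order G g -> 0 < k -> N (gpow g k) -> False.
Proof.
  intros HS HF Hinf Hk HN.
  destruct (fin_order N _ HS HF HN) as [t [Ht E]].
  rewrite <- gpow_mul in E. apply (Hinf (k * t)); auto. lia.
Qed.

Lemma conj_in_N {G : Group} (N : G -> Prop) (w a : G) :
  is_normal G N -> N a -> N (w ** a ** ginv w).
Proof.
  intros [_ HN] Ha. pose proof (HN (ginv w) a Ha) as H. rewrite ginvK in H. exact H.
Qed.

Lemma conj_period {G : Group} (N : G -> Prop) (g n : G) :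
  is_normal G N -> finite_set G N -> N n -> exists d, 0 < d /\ commute (gpow g d) n.
Proof.
  intros HNo [l Hl] Hn.
  set (f := fun k => ginv (gpow g k) ** n ** gpow g k).
  assert (Hf : forall k, N (f k)).
  { induction k.
    - unfold f; simpl. rewrite ginv1, gmul1l, gmul1r. exact Hn.
    - unfold f in *. rewrite gpow_Sr, ginvM.
      replace (ginv g ** ginv (gpow g k) ** n ** (gpow g k ** g))
        with (ginv g ** (ginv (gpow g k) ** n ** gpow g k) ** g)
        by (rewrite !gmulA; reflexivity).
      apply (proj2 HNo). exact IHk. }
  destruct (pigeon l f) as [i [j [Hij E]]]; [intro k; apply Hl, Hf|].
  exists (j - i). split; [lia|].
  set (d := j - i) in *. replace j with (i + d) in E by lia.
  set (u := f i) in *.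
  assert (Eu : f (i + d) = ginv (gpow g d) ** u ** gpow g d).
  { unfold u; unfold f. rewrite gpow_add, ginvM, !gmulA. reflexivity. }
  rewrite Eu in E.
  assert (Cu : commute (gpow g d) u).
  { unfold commute. rewrite E at 1. rewrite !gmulA, gmulVr, gmul1l. reflexivity. }
  assert (En : n = gpow g i ** u ** ginv (gpow g i)).
  { unfold u; unfold f. rewrite !gmulA, gmulVr, gmul1l, <- gmulA, gmulVr, gmul1r. reflexivity. }
  rewrite En. apply commute_mul; [apply commute_mul|]; auto.
  - apply commute_pow, commute_sym, commute_pow. unfold commute; reflexivity.
  - apply commute_inv, commute_pow, commute_sym, commute_pow. unfold commute; reflexivity.
Qed.

Lemma all_period {G : Group} (N : G -> Prop) (g : G) (l : list G) :
  is_normal G N -> finite_set G N ->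
  exists m, 0 < m /\ forall n, In n l -> N n -> commute (gpow g m) n.
Proof.
  intros HNo HF. induction l as [|a l IH].
  - exists 1. split; [lia|]. intros n [].
  - destruct IH as [m [Hm Hc]].
    destruct (classic (N a)) as [Ha|Ha].
    + destruct (conj_period N g a HNo HF Ha) as [d [Hd Cd]].
      exists (m * d). split; [nia|]. intros n [<-|Hin] Hn.
      * rewrite Nat.mul_comm, gpow_mul. apply commute_sym, commute_pow, commute_sym; auto.
      * rewrite gpow_mul. apply commute_sym, commute_pow, commute_sym; auto.
    + exists m. split; auto. intros n [<-|Hin] Hn; [contradiction|auto].
Qed.

Lemma pow_diff1 {G : Group} (g : G) p q : q <= p ->
  gpow g p ** ginv (gpow g q) = gpow g (p - q).
Proof.
  intro H. replace p with ((p - q) + q) at 1 by lia.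
  rewrite gpow_add, <- gmulA, gmulVr, gmul1r. reflexivity.
Qed.

Lemma pow_diff2 {G : Group} (g : G) p q : p < q ->
  gpow g p ** ginv (gpow g q) = ginv (gpow g (q - p)).
Proof.
  intro H. replace q with ((q - p) + p) at 1 by lia.
  rewrite gpow_add, ginvM, gmulA, gmulVr, gmul1l. reflexivity.
Qed.

Lemma mulVK {G : Group} (x w : G) : x ** ginv w ** w = x.
Proof. rewrite <- gmulA, gmulVl, gmul1r. reflexivity. Qed.

Lemma mulKV {G : Group} (x w : G) : x ** w ** ginv w = x.
Proof. rewrite <- gmulA, gmulVr, gmul1r. reflexivity. Qed.

Lemma conj_shift {G : Group} (a w b r : G) :
  a ** w ** (b ** r) = a ** (w ** b ** ginv w) ** (w ** r).
Proof. rewrite !gmulA, mulVK. reflexivity. Qed.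

Theorem lemma2p4 (G : Group)
  (hyp : forall H : G -> Prop, is_subgroup G H -> ~ abelian G H ->
         forall g : G, centralizer G H g -> H g)
  (N : G -> Prop) (hN : is_normal G N) (hfin : finite_set G N) :
  forall g : G, infinite_order G g -> centralizer G N g.
Proof.
  intros g Hinf n Hn. apply NNPP; intro Hne.
  pose proof hN as [HS HNc].
  destruct hfin as [l Hl].
  destruct (all_period N g l hN (ex_intro _ l Hl)) as [m [Hm Hc]].
  assert (Cx : forall a, N a -> commute (gpow g m) a) by (intros; apply Hc; auto).
  set (x := gpow g m) in *.
  set (h := gpow g (S m)).
  set (H := fun y => exists a, N a /\ exists i j, y = a ** gpow h i ** gpow (ginv h) j).
  assert (Chh : forall i j, commute (gpow (ginv h) j) (gpow h i)).
  { intros. apply commute_pow, commute_sym, commute_pow, commute_inv.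
    unfold commute; reflexivity. }
  assert (HH : is_subgroup G H).
  { destruct HS as [H1 [HM HI]]. split; [|split].
    - exists gone. split; auto. exists 0, 0. simpl. rewrite !gmul1r. reflexivity.
    - intros y z [a [Ha [i [j ->]]]] [b [Hb [k [p ->]]]].
      set (w := gpow h i ** gpow (ginv h) j).
      exists (a ** (w ** b ** ginv w)). split.
      + apply HM; auto. apply conj_in_N; auto.
      + exists (i + k), (j + p). rewrite !gpow_add.
        replace (a ** gpow h i ** gpow (ginv h) j ** (b ** gpow h k ** gpow (ginv h) p))
          with (a ** w ** (b ** (gpow h k ** gpow (ginv h) p)))
          by (unfold w; rewrite !gmulA; reflexivity).
        rewrite conj_shift. set (c := w ** b ** ginv w). unfold w.
        rewrite !gmulA. rewrite <- (gmulA _ (a ** c ** gpow h i) _ _), (Chh k j).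
        rewrite !gmulA. reflexivity.
    - intros y [a [Ha [i [j ->]]]].
      set (w := gpow h i ** gpow (ginv h) j).
      exists (ginv w ** ginv a ** ginv (ginv w)). split.
      + apply conj_in_N; auto.
      + exists j, i.
        replace (a ** gpow h i ** gpow (ginv h) j) with (a ** w) by (unfold w; rewrite gmulA; reflexivity).
        rewrite ginvK, ginvM.
        rewrite <- (gmul1r (ginv w ** ginv a)) at 1. rewrite <- !gmulA. f_equal. f_equal.
        unfold w. rewrite !gpow_inv, !gmulA, mulVK, gmulVr. reflexivity. }
  assert (Hxh : h = g ** x) by reflexivity.
  assert (Cxh : commute x h) by (apply gpow_comm).
  assert (HC : centralizer G H x).
  { intros y [a [Ha [i [j ->]]]]. apply commute_mul; [apply commute_mul|]; auto.
    - apply commute_pow; auto.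
    - apply commute_pow, commute_inv; auto. }
  assert (HnA : ~ abelian G H).
  { intro Hab. apply Hne.
    assert (E : n ** h = h ** n).
    { apply Hab.
      - exists n. split; auto. exists 0, 0. simpl. rewrite !gmul1r. reflexivity.
      - exists gone. split; [apply HS|]. exists 1, 0. simpl.
        rewrite gmul1l, !gmul1r. reflexivity. }
    rewrite Hxh, <- (gmulA _ g x n), (Cx n Hn), !gmulA in E.
    apply gcancel_r in E. symmetry; exact E. }
  destruct (hyp H HH HnA x HC) as [a [Ha [i [j Ex]]]].
  assert (Ea : a = x ** ginv (gpow (ginv h) j) ** ginv (gpow h i)).
  { rewrite Ex, !mulKV. reflexivity. }
  rewrite gpow_inv, ginvK in Ea. unfold x, h in Ea.
  rewrite <- !gpow_mul, <- gpow_add in Ea.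
  destruct (le_lt_dec (S m * i) (m + S m * j)) as [Hle|Hlt].
  - rewrite pow_diff1 in Ea by exact Hle.
    apply (pow_in_N_false N g (m + S m * j - S m * i) HS (ex_intro _ l Hl) Hinf).
    + assert (m + S m * j <> S m * i); [|lia].
      intro E. destruct (le_lt_dec i j).
      * nia.
      * assert (m = S m * (i - j)) by nia. nia.
    + rewrite <- Ea. exact Ha.
  - rewrite pow_diff2 in Ea by exact Hlt.
    apply (pow_in_N_false N g (S m * i - (m + S m * j)) HS (ex_intro _ l Hl) Hinf).
    + lia.
    + rewrite <- (ginvK (gpow g _)), <- Ea. apply (proj2 (proj2 HS)). exact Ha.
Qed.
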